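(* Let $p$ be a stochastic choice function rationalized by an MSC $\langle Q,\nu\rangle$. For every $M\in\mathcal N$ and distinct $i,j\in M$ with $p(i,\{i,j\})\in(0,1)$, $$\frac{\delta_{ij}(M)\,q_{ij}(M)}{p(j,\{i,j\})}=-\frac{\delta_{ji}(M)\,q_{ji}(M)}{p(i,\{i,j\})}.$$
   Context: $X$ is a finite set of alternatives; a menu is a nonempty subset of $X$, and $\mathcal N$ denotes the set of all menus. A stochastic choice function is a map $p:X\times\mathcal N\to[0,1]$ with $\sum_{i\in M}p(i,M)=1$ and $p(i,M)=0$ for $i\notin M$; $p(\cdot,M)$ denotes the row vector $(p(i,M))_{i\in M}$. For $M\in\mathcal N$ and $i,j\in M$ let $\delta_{ij}(M)=p(i,M)\,p(j,\{i,j\})-p(i,\{i,j\})\,p(j,M)$. An MSC (Markov stochastic choice model) $\langle Q,\nu\rangle$ consists of, for every menu $M$, a matrix $Q(M)=(q_{ij}(M))_{i,j\in M}$ with nonnegative entries and a probability distribution $\nu_M$ on $M$, such that for all $M\in\mathcal N$ and distinct $i,j\in M$: (A1) $q_{ii}(M)=1-\sum_{k\neq i}q_{ik}(M)>0$; (A2) if $q_{ij}(\{i,j\})=0$ then $q_{ji}(\{i,j\})>0$; (A3) $q_{ij}(\{i,j\})\,q_{ji}(M)=q_{ji}(\{i,j\})\,q_{ij}(M)$. For a right stochastic matrix $Q$ on $M$ and a distribution $\nu$ on $M$ define $\rho(\nu,Q)=\lim_{\alpha\to0^+}\sum_{t\ge0}\alpha(1-\alpha)^t\nu Q^t$ (the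 limit exists and satisfies $\rho(\nu,Q)(I-Q)=0$). $p$ is rationalized by the MSC $\langle Q,\nu\rangle$ if $p(\cdot,M)=\rho(\nu_M,Q(M))$ for every $M\in\mathcal N$. *)

(* Defs.v *)
From HB Require Import structures.
From mathcomp Require Import all_boot all_order all_algebra.
From mathcomp Require Import all_classical all_reals all_analysis.
Set Implicit Arguments. Unset Strict Implicit. Unset Printing Implicit Defensive.
Import Order.TTheory GRing.Theory Num.Theory numFieldNormedType.Exports.
Local Open Scope classical_set_scope.
Local Open Scope ring_scope.

(* Alternatives: a finite type X. Menus: nonempty M : {set X}.
   A stochastic choice function is p : X -> {set X} -> R (value on set0 irrelevant). *)
Definition menu2 (X : finType) (i j : X) : {set X} := ([set i; j])%SET.

Definition is_menu (X : finType) (M : {set X}) : Prop := M != finset.set0.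

Definition stoch_choice (R : realType) (X : finType) (p : X -> {set X} -> R) : Prop :=
  forall M : {set X}, is_menu M ->
    (forall i, 0 <= p i M <= 1) /\
    (\sum_(i in M) p i M = 1) /\
    (forall i, i \notin M -> p i M = 0).

Definition delta (R : realType) (X : finType) (p : X -> {set X} -> R)
  (M : {set X}) (i j : X) : R :=
  p i M * p j (menu2 i j) - p i (menu2 i j) * p j M.

(* An MSC: Q M i j = q_ij(M) (only entries with i,j in M matter),
   nu M i = nu_M(i). *)
Definition is_MSC (R : realType) (X : finType)
  (Q : {set X} -> X -> X -> R) (nu : {set X} -> X -> R) : Prop :=
  forall M : {set X}, is_menu M ->
    (forall i j, i \in M -> j \in M -> 0 <= Q M i j) /\
    (forall i, 0 <= nu M i) /\ (forall i, i \notin M -> nu M i = 0) /\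
    (\sum_(i in M) nu M i = 1) /\
    (forall i, i \in M ->
       Q M i i = 1 - \sum_(k in M | k != i) Q M i k /\ 0 < Q M i i) /\
    (forall i j, i \in M -> j \in M -> i != j ->
       (Q (menu2 i j) i j = 0 -> 0 < Q (menu2 i j) j i) /\
       (Q (menu2 i j) i j * Q M j i = Q (menu2 i j) j i * Q M i j)).

Fixpoint distr_iter (R : realType) (X : finType) (M : {set X})
  (nu : X -> R) (Q : X -> X -> R) (t : nat) : X -> R :=
  match t with
  | 0 => nu
  | t'.+1 => fun j => \sum_(k in M) distr_iter M nu Q t' k * Q k j
  end.

(* For a in (0,1) the series converges absolutely (nu Q^t is a probability
   vector), so limn of partial sums is its sum.
   rho(nu,Q)(j) = r  :<->  lim_{a -> 0+} sum_{t>=0} a (1-a)^t (nu Q^t)_j = r *)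
Definition abel_limit_is (R : realType) (X : finType) (M : {set X})
  (nu : X -> R) (Q : X -> X -> R) (j : X) (r : R) : Prop :=
  (fun a : R => limn (fun n : nat => \sum_(t < n) (a * (1 - a) ^+ t * distr_iter M nu Q t j)))
    @ at_right (0 : R) --> r.

Definition rationalized_by (R : realType) (X : finType) (p : X -> {set X} -> R)
  (Q : {set X} -> X -> X -> R) (nu : {set X} -> X -> R) : Prop :=
  is_MSC Q nu /\
  forall M : {set X}, is_menu M ->
    forall j, j \in M -> abel_limit_is M (nu M) (Q M) j (p j M).

(* Main.v *)
Require Import Defs.
From HB Require Import structures.
From mathcomp Require Import all_boot all_order all_algebra.
From mathcomp Require Import all_classical all_reals all_analysis.
From mathcomp Require Import ring lra.
Import Order.TTheory GRing.Theory Num.Theory numFieldNormedType.Exports.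
Local Open Scope classical_set_scope.
Local Open Scope ring_scope.

Lemma cvg_sumX (R : realType) (X : finType) (T0 : Type) (F : set_system T0) {FF : Filter F}
  (P : pred X) (f : X -> T0 -> R) (l : X -> R) :
  (forall k, P k -> f k @ F --> l k) ->
  (fun x => \sum_(k | P k) f k x) @ F --> \sum_(k | P k) l k.
Proof.
move=> H; rewrite unlock /=; elim: (index_enum X) => [|k r IH] /=.
  exact: cvg_cst.
case: ifP => Pk //; apply: cvgD => //; exact: H.
Qed.

Section Iter.
Variables (R : realType) (X : finType) (M : {set X}) (nu : X -> R) (Q : X -> X -> R).
Hypothesis Qnn : forall i j, i \in M -> j \in M -> 0 <= Q i j.
Hypothesis Qrow : forall i, i \in M -> \sum_(k in M) Q i k = 1.
Hypothesis nunn : forall i, 0 <= nu i.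
Hypothesis nusum : \sum_(i in M) nu i = 1.

Lemma di_ge0 t k : k \in M -> 0 <= distr_iter M nu Q t k.
Proof.
elim: t k => [|t IH] k kM /=; first exact: nunn.
by apply: sumr_ge0 => l lM; apply: mulr_ge0; [exact: IH|exact: Qnn].
Qed.

Lemma di_sum t : \sum_(k in M) distr_iter M nu Q t k = 1.
Proof.
elim: t => [|t IH] //=.
rewrite exchange_big /= -[RHS]IH; apply: eq_bigr => l lM.
by rewrite -mulr_sumr Qrow // mulr1.
Qed.

Lemma di_le1 t k : k \in M -> distr_iter M nu Q t k <= 1.
Proof.
move=> kM; rewrite -(di_sum t) (bigD1 k) //= lerDl.
by apply: sumr_ge0 => l /andP[lM _]; exact: di_ge0.
Qed.

Definition T a k n := \sum_(t < n) (a * (1 - a) ^+ t * distr_iter M nu Q t k).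

Lemma T_bound a k n : 0 < a < 1 -> k \in M -> T a k n <= 1 - (1 - a) ^+ n.
Proof.
move=> /andP[a0 a1] kM; elim: n => [|n IH]; first by rewrite /T big_ord0 expr0 subrr.
rewrite /T big_ord_recr /= -/(T a k n) exprS.
have h1 := di_le1 n k kM; have h2 : 0 <= (1 - a) ^+ n by apply: exprn_ge0; lra.
have h3 : 0 <= a * (1 - a) ^+ n by apply: mulr_ge0 => //; lra.
have : a * (1 - a) ^+ n * distr_iter M nu Q n k <= a * (1 - a) ^+ n.
  by rewrite -[X in _ <= X]mulr1 ler_wpM2l.
nra.
Qed.

Lemma T_cvg a k : 0 < a < 1 -> k \in M -> cvgn (T a k).
Proof.
move=> ha kM; apply: nondecreasing_is_cvgn.
  apply/nondecreasing_seqP => n; rewrite /T big_ord_recr /= lerDl.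
  case/andP: ha => a0 a1.
  by apply: mulr_ge0; [apply: mulr_ge0; [lra|apply: exprn_ge0; lra]|exact: di_ge0].
exists 1 => _ [n _ <-]; apply: le_trans (@T_bound a k n ha kM) _.
have : 0 <= (1 - a) ^+ n by case/andP: ha => ? ?; apply: exprn_ge0; lra.
lra.
Qed.

Lemma T_rec a j n : (1 - a) * \sum_(k in M) T a k n * Q k j = T a j n.+1 - a * nu j.
Proof.
rewrite /T big_ord_recl /= expr0 mulr1.
rewrite [X in _ = X - _]addrC addrK.
under eq_bigr do rewrite mulr_suml.
rewrite exchange_big /= mulr_sumr; apply: eq_bigr => t _.
rewrite /bump /= add1n exprS.
under eq_bigr do rewrite -mulrA.
by rewrite -mulr_sumr; ring.
Qed.
Lemma L_rel a j : 0 < a < 1 -> j \in M ->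
  (1 - a) * \sum_(k in M) limn (T a k) * Q k j = limn (T a j) - a * nu j.
Proof.
move=> ha jM.
have H1 : (fun n => (1 - a) * \sum_(k in M) T a k n * Q k j) @ \oo -->
           (1 - a) * \sum_(k in M) limn (T a k) * Q k j.
  apply: cvgMr; apply: cvg_sumX.
  by move=> k kM; apply: cvgMl; exact: T_cvg.
have H2 : (fun n => (1 - a) * \sum_(k in M) T a k n * Q k j) @ \oo -->
           limn (T a j) - a * nu j.
  under eq_cvg do rewrite T_rec.
  apply: cvgB; last exact: cvg_cst.
  by rewrite (cvg_shiftS (T a j)); exact: T_cvg.
exact: (cvg_unique _ H1 H2).
Qed.

Lemma stationary (p : X -> R) j : j \in M ->
  (forall k, k \in M -> (fun a => limn (T a k)) @ at_right (0:R) --> p k) ->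
  \sum_(k in M) p k * Q k j = p j.
Proof.
move=> jM Hp.
have H1 : (fun a => (1 - a) * \sum_(k in M) limn (T a k) * Q k j) @ at_right (0:R) -->
           (1 - 0) * \sum_(k in M) p k * Q k j.
  apply: cvgM; first by apply: cvgB; [exact: cvg_cst| apply: cvg_at_right_filter; exact: cvg_id].
  apply: cvg_sumX.
  by move=> k kM; apply: cvgMl; exact: Hp.
have H2 : (fun a => limn (T a j) - a * nu j) @ at_right (0:R) --> p j - 0 * nu j.
  apply: cvgB; first exact: Hp.
  apply: cvgMl; apply: cvg_at_right_filter; exact: cvg_id.
have E : \forall a \near at_right (0:R),
    (1 - a) * \sum_(k in M) limn (T a k) * Q k j = limn (T a j) - a * nu j.
  near=> a; apply: L_rel => //; apply/andP; split; near: a.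
    exact: nbhs_right_gt.
  exact: nbhs_right_lt ltr01.
have H3 : (fun a => limn (T a j) - a * nu j) @ at_right (0:R) -->
           (1 - 0) * \sum_(k in M) p k * Q k j.
  by apply: cvg_trans H1; exact: near_eq_cvg.
have h : (1 - 0) * \sum_(k in M) p k * Q k j = p j - 0 * nu j by exact: cvg_unique H3 H2.
by move: h; rewrite subr0 mul1r mul0r subr0.
Unshelve. all: by end_near.
Qed.
End Iter.
Lemma sum2 (R : realType) (X : finType) (i j : X) (f : X -> R) : i != j ->
  \sum_(k in menu2 i j) f k = f i + f j.
Proof.
move=> ij; rewrite /menu2 big_setU1 ?big_set1 //.
by rewrite inE.
Qed.

Theorem lemmaA2 (R : realType) (X : finType) (p : X -> {set X} -> R)
  (Q : {set X} -> X -> X -> R) (nu : {set X} -> X -> R) :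
  stoch_choice p -> rationalized_by p Q nu ->
  forall (M : {set X}) (i j : X), i \in M -> j \in M -> i != j ->
    0 < p i (menu2 i j) < 1 ->
    delta p M i j * Q M i j / p j (menu2 i j) =
    - (delta p M j i * Q M j i / p i (menu2 i j)).
Proof.
move=> Hsc [Hmsc Hrat] M i j iM jM ij /andP[pi0 pi1].
set M2 := menu2 i j.
have iM2 : i \in M2 by rewrite /M2 /menu2 !inE eqxx.
have jM2 : j \in M2 by rewrite /M2 /menu2 !inE eqxx orbT.
have mM2 : is_menu M2 by apply/set0Pn; exists i.
have mM : is_menu M by apply/set0Pn; exists i.
have [_ [Hs _]] := Hsc M2 mM2.
rewrite sum2 // in Hs.
have [Qnn [nunn [_ [nusum [A1 _]]]]] := Hmsc M2 mM2.
have [_ [_ [_ [_ [_ A23]]]]] := Hmsc M mM.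
have [A2 A3] := A23 i j iM jM ij.
have Qrow : forall k, k \in M2 -> \sum_(l in M2) Q M2 k l = 1.
  move=> k kM; rewrite (bigD1 k) //=; have [-> _] := A1 k kM; ring.
have St := @stationary R X M2 (nu M2) (Q M2) Qnn Qrow nunn nusum (fun k => p k M2) i iM2
   (fun k kM => Hrat M2 mM2 k kM).
rewrite sum2 // in St.
have Hii : Q M2 i i = 1 - Q M2 i j.
  have := Qrow i iM2; rewrite sum2 //; lra.
rewrite Hii in St.
have e : menu2 j i = M2 by rewrite /M2 /menu2 finset.setUC.
rewrite /delta e -/M2.
set pi := p i M2 in pi0 pi1 Hs St *.
set pj := p j M2 in Hs St *.
have pj0 : 0 < pj by lra.
have Hst : pj * Q M2 j i = pi * Q M2 i j by lra.
have ha : Q M2 i j != 0.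
  apply/eqP => h0; have := A2 h0; move: Hst; rewrite h0 mulr0 => /eqP.
  rewrite mulf_eq0 (gt_eqF pj0) /= => /eqP ->; by rewrite ltxx.
have hq : Q M j i = Q M i j * pi / pj.
  apply: (mulIf ha); rewrite mulrC A3.
  rewrite (_ : Q M i j * pi / pj * Q M2 i j = Q M i j * (pi * Q M2 i j) / pj).
    rewrite -Hst; field; exact: lt0r_neq0.
  by rewrite mulrA mulrAC.
rewrite hq; field; apply/andP; split; exact: lt0r_neq0.
Qed.
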